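(* Let $R=(g(x),f(x))$ be a Riordan matrix with positive main diagonal entries, and let $I$ be the infinite identity matrix. Then $R+I$ is a Riordan matrix if and only if $f(x)=x$.
   Context: A Riordan matrix $(g(x),f(x))$, with formal power series $g(x)=g_0+g_1x+\cdots$, $g_0\ne0$, and $f(x)=f_1x+f_2x^2+\cdots$, $f_1\ne0$, is the infinite lower triangular matrix (indices $0,1,2,\ldots$) whose $j$-th column has generating function $g(x)f(x)^j$; its main diagonal entries are $g_0f_1^j$. *)

(* Defs.v *)
(* Formal power series over a real field R are represented
   by their coefficient sequences nat -> R; infinite lower-triangular
   matrices (indices 0,1,2,...) by functions nat -> nat -> R. *)
From mathcomp Require Import all_boot all_order all_algebra.
Set Implicit Arguments. Unset Strict Implicit. Unset Printing Implicit Defensive.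
Import Order.TTheory GRing.Theory Num.Theory.
Local Open Scope ring_scope.

Definition fps (R : realFieldType) := nat -> R.

Definition fps_mul (R : realFieldType) (a b : fps R) : fps R :=
  fun n => \sum_(i < n.+1) a i * b (n - i)%N.

Definition fps_one (R : realFieldType) : fps R := fun n => (n == 0%N)%:R.

Definition fps_X (R : realFieldType) : fps R := fun n => (n == 1%N)%:R.

Definition fps_pow (R : realFieldType) (f : fps R) (k : nat) : fps R :=
  iter k (fps_mul f) (fps_one R).

Definition riordan_pair (R : realFieldType) (g f : fps R) : Prop :=
  g 0%N != 0 /\ f 0%N = 0 /\ f 1%N != 0.

Definition riordan (R : realFieldType) (g f : fps R) : nat -> nat -> R :=
  fun n j => fps_mul g (fps_pow f j) n.

Definition is_riordan (R : realFieldType) (M : nat -> nat -> R) : Prop :=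
  exists g f : fps R, riordan_pair g f /\ forall n j, M n j = riordan g f n j.

Definition idmat (R : realFieldType) : nat -> nat -> R := fun n j => (n == j)%:R.

(* Main.v *)
Require Import Defs.
From mathcomp Require Import all_boot all_order all_algebra.
From mathcomp Require Import ring.
Import Order.TTheory GRing.Theory Num.Theory.
Local Open Scope ring_scope.

Set Implicit Arguments. Unset Strict Implicit.
Section Aux.
Variable R : realFieldType.

Definition agree (N : nat) (a : fps R) (p : {poly R}) :=
  forall m, (m <= N)%N -> a m = p`_m.

Lemma agree_mul N a b p q : agree N a p -> agree N b q ->
  agree N (fps_mul a b) (p * q).
Proof.
move=> Ha Hb m le; rewrite /fps_mul coefM; apply: eq_bigr => i _.
have lei : (i <= m)%N by rewrite -ltnS ltn_ord.
rewrite Ha ?Hb //; first exact: leq_trans (leq_subr _ _) le.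
exact: leq_trans lei le.
Qed.

Lemma agree_one N : agree N (fps_one R) 1.
Proof. by move=> m _; rewrite coef1. Qed.

Lemma agree_pow N f p j : agree N f p -> agree N (fps_pow f j) (p ^+ j).
Proof.
move=> Hf; elim: j => [|j IH]; first by rewrite expr0; exact: agree_one.
rewrite /fps_pow iterS exprS; exact: agree_mul.
Qed.

Lemma agree_tr N a : agree N a (\poly_(i < N.+1) a i).
Proof. by move=> m le; rewrite coef_poly ltnS le. Qed.

Lemma agree_riordan N g f G F : agree N g G -> agree N f F ->
  forall m j, (m <= N)%N -> riordan g f m j = (G * F ^+ j)`_m.
Proof.
move=> HG HF m j le; rewrite /riordan.
exact: (agree_mul HG (agree_pow j HF)).
Qed.

Definition zeroto (N : nat) (p : {poly R}) := forall m, (m <= N)%N -> p`_m = 0.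

Lemma zeroto_sub N p q : zeroto N p -> zeroto N q -> zeroto N (p - q).
Proof. by move=> Hp Hq m le; rewrite coefB Hp ?Hq // subr0. Qed.

Lemma zeroto_mull N p q : zeroto N p -> zeroto N (q * p).
Proof.
move=> Hp m le; rewrite coefM big1 // => i _; rewrite Hp ?mulr0 //.
exact: leq_trans (leq_subr _ _) le.
Qed.

Lemma zeroto_mulr N p q : zeroto N p -> zeroto N (p * q).
Proof. by move=> Hp; rewrite mulrC; apply: zeroto_mull. Qed.

Lemma val_arg N (G u : {poly R}) : zeroto N (G * u ^+ 2) -> G`_0 != 0 ->
  forall k, (k.*2 <= N)%N -> u`_k = 0.
Proof.
move=> HZ HG0.
suff: forall K k, (k <= K)%N -> (k.*2 <= N)%N -> u`_k = 0.
  by move=> H k; apply: (H k).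
elim=> [|K IH] k lek lkN.
- move: lek; rewrite leqn0 => /eqP ->.
  have := HZ 0%N (leq0n _); rewrite coef0M expr2 coef0M => /eqP.
  by rewrite !mulf_eq0 (negbTE HG0) orbb /= => /eqP.
- have Ht : take_poly k u = 0.
    apply/polyP => i; rewrite coef_take_poly coef0; case: ifP => // ik.
    apply: (IH i); first by rewrite -ltnS (leq_trans ik lek).
    apply: leq_trans lkN; rewrite leq_double; exact: ltnW.
  have Hu := poly_take_drop k u; rewrite Ht add0r in Hu.
  set w := drop_poly k u in Hu.
  have E : G * u ^+ 2 = 'X^(k.*2) * (G * w ^+ 2).
    by rewrite -Hu -addnn exprD; ring.
  have := HZ _ lkN; rewrite E coefXnM ltnn subnn coef0M expr2 coef0M.
  move=> /eqP; rewrite !mulf_eq0 (negbTE HG0) orbb /= => /eqP.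
  by rewrite /w coef_drop_poly add0n.
Qed.

End Aux.

Theorem lemma5p2 (R : realFieldType) (g f : fps R) :
  riordan_pair g f ->
  (forall j : nat, 0 < riordan g f j j) ->
  (is_riordan (fun n j => riordan g f n j + idmat R n j) <->
   forall n : nat, f n = fps_X R n).
Proof.
move=> [g0 [f0 f1]] Hpos; split.
- move=> [g' [f' [[g'0 _] H]]] n.
  pose N := (n.*2.+1)%N.
  pose G := \poly_(i < N.+1) g i. pose F := \poly_(i < N.+1) f i.
  pose G' := \poly_(i < N.+1) g' i. pose F' := \poly_(i < N.+1) f' i.
  have HD : forall j, zeroto N (G * F ^+ j + 'X ^+ j - G' * F' ^+ j).
    move=> j m le; rewrite coefB coefD coefXn.
    rewrite -(agree_riordan (@agree_tr _ N g) (@agree_tr _ N f)) //.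
    rewrite -(agree_riordan (@agree_tr _ N g') (@agree_tr _ N f')) //.
    by rewrite -H /idmat subrr.
  set D0 := G * F ^+ 0 + 'X ^+ 0 - G' * F' ^+ 0 in HD.
  have HD0 : zeroto N D0 := HD 0%N.
  have HD1 := HD 1%N. have HD2 := HD 2%N.
  set D1 := G * F ^+ 1 + 'X ^+ 1 - G' * F' ^+ 1 in HD1.
  set D2 := G * F ^+ 2 + 'X ^+ 2 - G' * F' ^+ 2 in HD2.
  have E : G * (F - 'X) ^+ 2 =
    (G + 1) * (D2 - ('X *+ 2) * (D1 - D0 * F') - D0 * F' ^+ 2)
    - (D1 - D0 * F') * ((G + 1) * (F' - 'X) + G * (F - 'X)).
    rewrite /D0 /D1 /D2; ring.
  have HZ : zeroto N (G * (F - 'X) ^+ 2).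
    have HE1 : zeroto N (D1 - D0 * F') by apply: zeroto_sub => //; apply: zeroto_mulr.
    rewrite E; apply: zeroto_sub; last exact: zeroto_mulr.
    apply: zeroto_mull; apply: zeroto_sub; last exact: zeroto_mulr.
    by apply: zeroto_sub => //; apply: zeroto_mull.
  have HG0 : G`_0 != 0 by rewrite coef_poly.
  have := val_arg HZ HG0 (leqnSn _).
  rewrite coefB coefX coef_poly /fps_X.
  have -> : (n < N.+1)%N by rewrite ltnS /N -addnn (leq_trans (leq_addr n n)).
  by move/eqP; rewrite subr_eq0 => /eqP.
- move=> Hf.
  have Hg0 : 0 < g 0%N.
    have := Hpos 0%N; rewrite /riordan /fps_mul big_ord1 /fps_pow /= /fps_one.
    by rewrite mulr1.
  exists (fun m => g m + (m == 0%N)%:R), f; split.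
    split; last by [].
    by rewrite eqxx; apply: lt0r_neq0; apply: ltr_wpDr.
  move=> m j.
  pose N := m.+1.
  have HF : agree N f 'X by move=> i _; rewrite Hf coefX.
  have HG1 : agree N (fun m => g m + (m == 0%N)%:R) (\poly_(i < N.+1) g i + 1).
    by move=> i le; rewrite coefD coef1 coef_poly ltnS le.
  have le : (m <= N)%N by apply: leqnSn.
  rewrite (agree_riordan (@agree_tr _ N g) HF) // (agree_riordan HG1 HF) //.
  by rewrite mulrDl mul1r coefD /idmat coefXn.
Qed.
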